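(* Let $K$ be a field and let $\vec a_{0,1},\dots,\vec a_{0,n},\vec a_{1,1},\dots,\vec a_{1,n}\in K^{n+1}$ satisfy: for every $\vec s=(s_1,\dots,s_n)\in\{0,1\}^n$ and every $k\in\{1,\dots,n\}$, the set $\{\vec a_{s_1,1},\dots,\vec a_{s_n,n},\vec a_{1-s_k,k}\}$ is linearly independent. For $\vec s\in\{0,1\}^n$ let $\vec x_{\vec s}$ be the solution of the equations $\hat a_{s_1,1}=\dots=\hat a_{s_n,n}=0$. If $\vec s\neq\vec r$, then $\vec x_{\vec s}\neq\vec x_{\vec r}$.
   Context: For $\vec a\in K^{n+1}$, $\hat a$ denotes the affine-linear function $\hat a(x_1,\dots,x_n)=\vec a\cdot\vec x$ with $\vec x=(x_1,\dots,x_n,1)$. *)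

(* Defs.v *)
From HB Require Import structures.
From mathcomp Require Import all_boot all_order all_algebra.
Set Implicit Arguments. Unset Strict Implicit. Unset Printing Implicit Defensive.
Import GRing.Theory.
Local Open Scope ring_scope.

(* hat a (x_1,...,x_n) = a . (x_1,...,x_n,1) for a in K^(n+1) *)
Definition affine_eval (K : fieldType) (n : nat) (a : 'rV[K]_n.+1) (x : 'rV[K]_n) : K :=
  \sum_(i < n) a 0 (widen_ord (leqnSn n) i) * x 0 i + a 0 ord_max.

Definition flip_family (K : fieldType) (n : nat)
    (a : bool -> 'I_n -> 'rV[K]_n.+1) (s : {ffun 'I_n -> bool}) (k : 'I_n)
    : 'M[K]_n.+1 :=
  \matrix_(i < n.+1) match unlift ord_max i with
                      | Some j => a (s j) j
                      | None => a (~~ s k) k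
                      end.

Definition solves (K : fieldType) (n : nat)
    (a : bool -> 'I_n -> 'rV[K]_n.+1) (s : {ffun 'I_n -> bool}) (x : 'rV[K]_n) : Prop :=
  forall i : 'I_n, affine_eval (a (s i) i) x = 0.

(* Main.v *)
Require Import Defs.
From HB Require Import structures.
From mathcomp Require Import all_boot all_order all_algebra.
Local Open Scope ring_scope.
Import GRing.Theory.

Definition extv (K : fieldType) (n : nat) (x : 'rV[K]_n) : 'cV[K]_n.+1 :=
  \col_l (match unlift ord_max l with Some j => x 0 j | None => 1 end).
Arguments extv {K n}.

Lemma extv_eval (K : fieldType) (n : nat) (x : 'rV[K]_n) (b : 'rV[K]_n.+1) :
  \sum_l b 0 l * extv x l 0 = affine_eval b x.
Proof.
rewrite big_ord_recr /= /affine_eval; congr (_ + _).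
  apply: eq_bigr => i _; rewrite /extv mxE.
  have -> : widen_ord (leqnSn n) i = lift ord_max i by apply/val_inj; rewrite /= /bump leqNgt ltn_ord.
  by rewrite liftK.
by rewrite /extv mxE unlift_none mulr1.
Qed.

Theorem lemma5 (K : fieldType) (n : nat) (a : bool -> 'I_n -> 'rV[K]_n.+1)
  (hind : forall (s : {ffun 'I_n -> bool}) (k : 'I_n), row_free (flip_family a s k))
  (s r : {ffun 'I_n -> bool}) (xs xr : 'rV[K]_n) :
  solves a s xs -> solves a r xr -> s != r -> xs != xr.
Proof.
move=> Hs Hr Hsr; apply/negP => /eqP Exr; subst xr.
have [k Hk] : exists k, s k != r k.
  apply/existsP; rewrite -negb_forall; apply: contra Hsr => /forallP H.
  by apply/eqP/ffunP => i; apply/eqP.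
have Hrk : r k = ~~ s k by move: Hk; case: (s k); case: (r k).
have HM := hind s k; rewrite row_free_unit in HM.
have H0 : flip_family a s k *m extv xs = 0.
  apply/matrixP => i j; rewrite !mxE (ord1 j).
  rewrite (eq_bigr (fun l => (match unlift ord_max i with
                      | Some j => a (s j) j
                      | None => a (~~ s k) k
                      end) 0 l * extv xs l 0)); last by move=> l _; rewrite mxE.
  rewrite extv_eval; case: (unlift ord_max i) => [j'|]; first exact: Hs.
  by rewrite -Hrk; exact: Hr.
have Hv : extv xs = 0 by rewrite -(mulKmx HM (extv xs)) H0 mulmx0.
have := congr1 (fun m : 'cV[K]_n.+1 => m ord_max 0) Hv.
by rewrite /extv !mxE unlift_none => /eqP; rewrite oner_eq0.
Qed.
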